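(* Let $\mathbf{F}$ be a finite field with $q$ elements, let $n=r_1+\dots+r_s$ with $r_1,\dots,r_s>0$, and let $A=\operatorname{diag}(J_{r_1}(0),\dots,J_{r_s}(0))\in M_n(\mathbf{F})$. Consider the $q^n$ matrices obtained from $A$ by replacing its last column by an arbitrary column vector in $\mathbf{F}^n$. Then: (a) the number of nilpotent matrices among them equals the number of non-nilpotent semi-idempotent matrices among them, and both numbers equal $q^{n-r_s}$; (b) if $r_s>1$, then the number of nilpotent matrices among them of rank equal to $\operatorname{rank} A$ equals the number of non-nilpotent semi-idempotent matrices among them of rank equal to $\operatorname{rank} A$, and both numbers equal $q^{n-r_s-(s-1)}$.
   Context: $J_\ell(0)$ is the lower $\ell\times\ell$ Jordan block with eigenvalue $0$: entries $1$ directly below the diagonal and $0$ elsewhere. A square matrix $B$ is semi-idempotent if $\mathbf{F}^n=X\oplus Y$ with $X,Y$ $B$-stable, $B|_X$ the identity and $B|_Y$ nilpotent. *)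

(* Defs.v *)
From HB Require Import structures.
From mathcomp Require Import all_boot all_order all_algebra.
From mathcomp Require Import boolp.
Set Implicit Arguments. Unset Strict Implicit. Unset Printing Implicit Defensive.
Import GRing.Theory.
Local Open Scope ring_scope.

Definition jordan0 (F : nzRingType) (l : nat) : 'M[F]_l :=
  \matrix_(i < l, j < l) ((val i == (val j).+1)%N)%:R.

Definition jordan_diag (F : nzRingType) (m : nat) (r : 'I_m -> nat)
  : 'M[F]_(\sum_(i < m) r i) :=
  mxdiag (fun i => jordan0 F (r i)).

Definition repl_last_col (F : Type) (n : nat) (A : 'M[F]_n) (v : 'cV[F]_n)
  : 'M[F]_n :=
  \matrix_(i, j) if (val j == n.-1)%N then v i 0 else A i j.

Definition is_nilpotent (F : nzRingType) (n : nat) (B : 'M[F]_n) : Prop :=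
  exists k : nat, B ^+ k = 0.

(* Semi-idempotent: F^n = X (+) Y with X, Y B-stable, B|_X = id, B|_Y nilpotent.
   Subspaces of column vectors F^n are encoded (mxalgebra, row-space
   convention) by matrices whose rows are the transposed vectors; so
   "B x in X for x in X" is "X *m B^T <= X", etc. *)
Definition semi_idempotent (F : fieldType) (n : nat) (B : 'M[F]_n) : Prop :=
  exists X Y : 'M[F]_n,
    [/\ (X + Y :=: 1%:M)%MS /\ mxdirect (X + Y),
        stablemx X B^T, stablemx Y B^T,
        X *m B^T = X & exists k : nat, Y *m (B^T) ^+ k = 0].

(* Main.v *)
Require Import Defs.
From HB Require Import structures.
From mathcomp Require Import all_boot all_order all_algebra.
From mathcomp Require Import boolp.
From mathcomp Require Import zify.
Import GRing.Theory.
Local Open Scope ring_scope.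
Set Implicit Arguments. Unset Strict Implicit. Unset Printing Implicit Defensive.

Lemma count_vec (F : finFieldType) n (T : {set 'I_n}) (f : 'I_n -> F) :
  #|[set v : 'cV[F]_n | [forall i in T, v i 0 == f i]]| = (#|F| ^ (n - #|T|))%N.
Proof.
pose phi (g : {ffun 'I_n -> F}) : 'cV[F]_n := \col_i (g i + f i).
have phiI : injective phi.
  move=> g1 g2 e; apply/ffunP => i.
  by have := congr1 (fun M : 'cV[F]_n => M i 0) e; rewrite /phi !mxE => /addIr.
have -> : [set v : 'cV[F]_n | [forall i in T, v i 0 == f i]] =
    phi @: [set g | g \in pffun_on (0 : F) (~: T) predT].
  apply/setP => v; rewrite inE; apply/idP/imsetP.
    move/forallP => hv; exists [ffun i => v i 0 - f i].
      rewrite inE; apply/pffun_onP; split; last by [].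
      apply/subsetP => i; rewrite !inE ffunE; apply: contraNN => iT.
      by have := hv i; rewrite iT => /eqP ->; rewrite subrr.
    by apply/matrixP => i c; rewrite (ord1 c) !mxE ffunE subrK.
  case=> g; rewrite inE => /pffun_onP[sup _] ->; apply/forallP => i; apply/implyP => iT.
  rewrite mxE; have -> : g i = 0.
    apply/eqP; apply: contraTT iT => gi.
    by have := subsetP sup i; rewrite !inE; apply.
  by rewrite add0r.
rewrite card_imset // cardsE card_pffun_on.
have h := cardsC T; rewrite card_ord in h.
have -> : (n - #|T| = #|~: T|)%N by lia.
by [].
Qed.

Lemma card_M (F : finFieldType) n (A : 'M[F]_n) (lst : 'I_n) (hlst : (lst : nat) = n.-1)
  (P : pred 'M[F]_n) :
  #|[set B in [set B : 'M[F]_n | [exists v : 'cV[F]_n, B == repl_last_col A v]] | P B]|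
  = #|[set v : 'cV[F]_n | P (repl_last_col A v)]|.
Proof.
have rI : injective (repl_last_col A).
  move=> v1 v2 e; apply/matrixP => i c; rewrite (ord1 c).
  have := congr1 (fun M : 'M[F]_n => M i lst) e; rewrite !mxE (_ : (_ == n.-1) = true) //; exact/eqP.
rewrite -(card_imset _ rI); apply: eq_card => B; rewrite !inE.
apply/andP/imsetP => [[/existsP[v /eqP ->] pB]|[v]]; first by exists v; rewrite ?inE.
rewrite inE => pv ->; split => //; apply/existsP; exists v; exact: eqxx.
Qed.

Section Abs.
Variable F : finFieldType.
Variables (n p : nat) (A : 'M[F]_n) (S : {set 'I_n}) (lst : 'I_n).
Hypothesis hlst : (lst : nat) = n.-1.
Hypothesis hA : forall i j, A i j = (((i : nat) == ((j : nat)).+1) && (i \notin S))%:R.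
Hypothesis hS0 : forall i : 'I_n, (i : nat) = 0%N -> i \in S.
Hypothesis hSp : forall i : 'I_n, (p <= i)%N -> (i \in S) = ((i : nat) == p).
Hypothesis hp : (p < n)%N.

Definition prv (i : 'I_n) : 'I_n := Ordinal (leq_ltn_trans (leq_pred i) (ltn_ord i)).
Definition ev (j : nat) : 'cV[F]_n := \col_i (((i : nat) == j)%:R).

Lemma prvE i : (prv i : nat) = ((i : nat)).-1. Proof. by []. Qed.

Lemma notS_pos i : i \notin S -> (0 < (i : nat))%N.
Proof. by move=> iS; rewrite lt0n; apply/eqP => /hS0; apply/negP. Qed.

Lemma sumA (f : 'I_n -> F) i :
  \sum_j A i j * f j = if i \in S then 0 else f (prv i).
Proof.
case: ifP => iS.
  by apply: big1 => j _; rewrite hA iS andbF mul0r.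
have i0 := notS_pos (negbT iS).
rewrite (bigD1 (prv i)) //= hA /= prednK // eqxx iS mul1r big1 ?addr0 // => j jn.
rewrite hA iS andbT; case: eqP => [e|_]; last by rewrite mul0r.
by move: jn; rewrite (_ : j = prv i) ?eqxx //; apply: val_inj; rewrite /= e.
Qed.

Lemma lst_eq (j : 'I_n) : ((j : nat) == n.-1) = (j == lst).
Proof. by rewrite -hlst. Qed.

Lemma Alst i : A i lst = 0.
Proof.
rewrite hA hlst; case: eqP => //= e.
by have := ltn_ord i; rewrite e; lia.
Qed.

Lemma Bdef (v : 'cV[F]_n) : repl_last_col A v = A + v *m delta_mx 0 lst.
Proof.
apply/matrixP => i j; rewrite !mxE big_ord1 !mxE lst_eq eqxx /=.
by case: eqP => [->|_]; rewrite ?Alst ?add0r ?mulr1 // mulr0 addr0.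
Qed.

Lemma Bx (v : 'cV[F]_n) c' (x : 'M[F]_(n, c')) i c :
  (repl_last_col A v *m x) i c =
  (if i \in S then 0 else x (prv i) c) + v i 0 * x lst c.
Proof.
rewrite Bdef mulmxDl -mulmxA !mxE sumA big_ord1; congr (_ + _).
rewrite !mxE (bigD1 lst) //= !mxE eqxx mul1r big1 ?addr0 // => j jn.
by rewrite !mxE eq_sym (negbTE jn) mul0r.
Qed.


Lemma p_lst : (p <= lst)%N.
Proof. by rewrite hlst; lia. Qed.

Section V.
Variable v : 'cV[F]_n.
Local Notation B := (repl_last_col A v).

Lemma mulXS t c' (x : 'M[F]_(n, c')) : B ^+ t.+1 *m x = B *m (B ^+ t *m x).
Proof. by rewrite exprS -mulmxE mulmxA. Qed.

Lemma phase2 c' (x : 'M[F]_(n,c')) t :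
  (forall (i : 'I_n) (c : 'I_c'), (p <= i)%N -> x i c = 0) ->
  forall (i : 'I_n) (c : 'I_c'), ((i < t) || (p <= i))%N -> (B ^+ t *m x) i c = 0.
Proof.
move=> hx; elim: t => [|t IH] i c /=.
  by rewrite expr0 mul1mx => /hx.
move=> hi; rewrite mulXS Bx (IH lst) ?p_lst ?orbT // mulr0 addr0.
case: ifP => iS //; apply: IH; rewrite prvE.
have i0 := notS_pos (negbT iS).
case/orP: hi => hi; first by apply/orP; left; move: hi; rewrite ltnS; lia.
have : (i : nat) != p by rewrite -hSp // iS.
by move=> ne; apply/orP; right; lia.
Qed.

Lemma killz c' (x : 'M[F]_(n,c')) s :
  (forall (i : 'I_n) (c : 'I_c'), (p <= i)%N -> x i c = 0) -> (p <= s)%N -> B ^+ s *m x = 0.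
Proof.
move=> hx ps; rewrite -(subnK ps) exprD -mulmxE -mulmxA.
have -> : B ^+ p *m x = 0.
  by apply/matrixP => i c; rewrite [RHS]mxE (phase2 hx) //; case: ltnP.
by rewrite mulmx0.
Qed.

Lemma phase1 c' (x : 'M[F]_(n,c')) t :
  (forall i : 'I_n, (p <= i)%N -> v i 0 = 0) ->
  forall (i : 'I_n) (c : 'I_c'), (p <= i < p + t)%N -> (B ^+ t *m x) i c = 0.
Proof.
move=> hv; elim: t => [|t IH] i c /=.
  by rewrite addn0; case/andP => /leq_ltn_trans h /h; rewrite ltnn.
case/andP=> pi hi; rewrite mulXS Bx hv // mul0r addr0.
case: ifP => iS //; apply: IH; rewrite prvE.
have : (i : nat) != p by rewrite -hSp // iS.
by move=> ne; apply/andP; split; lia.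
Qed.

Lemma nil_of : (forall i : 'I_n, (p <= i)%N -> v i 0 = 0) -> is_nilpotent B.
Proof.
move=> hv; exists (p + (n - p))%N.
rewrite exprD -mulmxE -[B ^+ (n - p)]mulmx1; apply: killz => // i c pi.
by apply: phase1 => //; rewrite pi /=; have := ltn_ord i; lia.
Qed.

Lemma exmin : (exists i : 'I_n, (p <= i)%N /\ v i 0 != 0) ->
  exists j0 : 'I_n, [/\ (p <= j0)%N, v j0 0 != 0 &
     forall i : 'I_n, (p <= i < j0)%N -> v i 0 = 0].
Proof.
case=> i1 [pi1 vi1].
have hex : exists j, [exists i : 'I_n, (i == j :> nat) && (p <= i)%N && (v i 0 != 0)].
  by exists (i1 : nat); apply/existsP; exists i1; rewrite eqxx pi1 vi1.
case: (ex_minnP hex) => j /existsP[i0 /andP[/andP[/eqP e pi0] vi0]] hmin.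
exists i0; split => // i /andP[pi lt]; apply/eqP; apply: contraTT lt => vi.
by rewrite -leqNgt e; apply: hmin; apply/existsP; exists i; rewrite eqxx pi vi.
Qed.

Section Pres.
Variable j0 : 'I_n.
Hypothesis pj0 : (p <= j0)%N.
Hypothesis vj0 : v j0 0 != 0.
Hypothesis hmin : forall i : 'I_n, (p <= i < j0)%N -> v i 0 = 0.

Definition Z (x : 'cV[F]_n) := forall i : 'I_n, (p <= i < j0)%N -> x i 0 = 0.
Definition NZ (x : 'cV[F]_n) := exists i : 'I_n, (j0 <= i)%N /\ x i 0 != 0.

Lemma presZ x : Z x -> Z (B *m x).
Proof.
move=> zx i /andP[pi ij]; rewrite Bx hmin ?pi // mul0r addr0.
case: ifP => iS //; apply: zx; rewrite prvE.
have : (i : nat) != p by rewrite -hSp // iS.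
by move=> ne; apply/andP; split; lia.
Qed.

Lemma presNZ x : Z x -> NZ x -> NZ (B *m x).
Proof.
move=> zx [i1 [ji1 xi1]].
have [xl|xl] := eqVneq (x lst 0) 0; last first.
  exists j0; split => //; rewrite Bx.
  have -> : (if j0 \in S then 0 else x (prv j0) 0) = 0.
    case: ifP => jS //; apply: zx; rewrite prvE.
    have : (j0 : nat) != p by rewrite -hSp // jS.
    have := notS_pos (negbT jS).
    by move=> ? ne; apply/andP; split; lia.
  by rewrite add0r mulf_neq0.
have i1l : (i1 < n.-1)%N.
  have := ltn_ord i1; have : i1 != lst by apply: contraNneq xi1 => ->; rewrite xl.
  rewrite -(inj_eq val_inj) /= hlst => ne lt; lia.
have lt : (i1.+1 < n)%N by lia.
exists (Ordinal lt); split; first by rewrite /=; lia.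
rewrite Bx xl mulr0 addr0 hSp /=; last by lia.
have -> : (i1.+1 == p) = false by apply/negbTE; lia.
by rewrite (_ : prv _ = i1) //; apply: val_inj.
Qed.

Lemma powNZ t x : Z x -> NZ x -> Z (B ^+ t *m x) /\ NZ (B ^+ t *m x).
Proof.
move=> zx nx; elim: t => [|t [IH1 IH2]]; first by rewrite expr0 mul1mx.
by rewrite mulXS; split; [apply: presZ | apply: presNZ].
Qed.

Lemma Z_ev : Z (ev j0).
Proof. by move=> i /andP[_ ij]; rewrite mxE; case: eqP => // e; move: ij; rewrite e ltnn. Qed.

Lemma NZ_ev : NZ (ev j0).
Proof. by exists j0; rewrite leqnn mxE eqxx oner_neq0. Qed.

End Pres.

Lemma nil_iff : is_nilpotent B <-> forall i : 'I_n, (p <= i)%N -> v i 0 = 0.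
Proof.
split; last exact: nil_of.
case=> t ht.
case: (boolP [forall i : 'I_n, (p <= i)%N ==> (v i 0 == 0)]) => [/forallP h|/forallPn [i]].
  by move=> i pi; apply/eqP; have := h i; rewrite pi.
rewrite negb_imply => /andP[pi vi].
case: (exmin (ex_intro _ i (conj pi vi))) => j0 [pj0 vj0 hm].
have [_ [i2 [_]]] := powNZ pj0 vj0 hm t (@Z_ev j0) (NZ_ev j0).
by rewrite ht mul0mx mxE eqxx.
Qed.


Lemma ev_col c' (M : 'M[F]_(c', n)) (j : 'I_n) i : (M *m ev j) i 0 = M i j.
Proof.
rewrite mxE (bigD1 j) //= mxE eqxx mulr1 big1 ?addr0 // => l lj.
by rewrite mxE (inj_eq val_inj) (negbTE lj) mulr0.
Qed.

Lemma Bev (j : nat) : (p <= j)%N -> (j < n.-1)%N -> B *m ev j = ev j.+1.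
Proof.
move=> pj jn; apply/matrixP => i c; rewrite (ord1 c) Bx !mxE.
have -> : ((lst : nat) == j) = false by apply/negbTE; rewrite hlst; lia.
rewrite mulr0 addr0; case: ifP => iS.
  case: eqP => // e; have := hSp (i := i); rewrite iS e => /(_ ltac:(lia)).
  by move/esym/eqP; lia.
have i0 := notS_pos (negbT iS).
by rewrite prvE; congr (_%:R); apply/eqP/eqP; lia.
Qed.

Lemma powev t (j : nat) : (p <= j)%N -> (j + t <= n.-1)%N -> B ^+ t *m ev j = ev (j + t).
Proof.
elim: t j => [|t IH] j pj jt; first by rewrite expr0 mul1mx addn0.
rewrite exprSr -mulmxE -mulmxA Bev; last by lia. 
  by rewrite IH ?addSnnS //; lia.
lia.
Qed.

Lemma comm1 t : B ^+ t * (B - 1) = (B - 1) * B ^+ t.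
Proof.
by rewrite mulrBr mulrBl mulr1 mul1r -exprS -exprSr.
Qed.

Lemma Bm1ev (j : nat) : B *m ev j - ev j = (B - 1) *m ev j.
Proof. by rewrite mulmxBl mul1mx. Qed.

Hypothesis hv : forall i : 'I_n, (p <= i)%N -> v i 0 = (i == lst)%:R.

Lemma zero_m1 (j : 'I_n) : ~~ ((p <= j) && (j < n.-1))%N ->
  forall (i : 'I_n) (c : 'I_1), (p <= i)%N -> ((B - 1) *m ev j) i c = 0.
Proof.
move=> hj i c pi; rewrite (ord1 c) -Bm1ev mxE Bx hv // !mxE.
have jl : (j < p)%N \/ j = lst.
  have := ltn_ord j; case: (ltnP j p) => [?|?]; [by left|right].
  by apply: val_inj; rewrite /= hlst; move: hj; rewrite negb_and; case/orP; lia.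
case: jl => [jp|->].
  have -> : ((lst : nat) == j) = false by apply/negbTE; have := p_lst; lia.
  have -> : ((i : nat) == j) = false by apply/negbTE; lia.
  rewrite mulr0 addr0 subr0; case: ifP => iS //.
  have : (i : nat) != p by rewrite -hSp // iS.
  by move=> ne; rewrite prvE (_ : (_ == _) = false) //; apply/negbTE; lia.
rewrite eqxx mulr1 (inj_eq val_inj).
case: ifP => iS; first by rewrite add0r subrr.
rewrite addrK -(inj_eq val_inj) /= hlst (_ : (_ == _) = false) //; apply/negbTE.
have := ltn_ord i; have := notS_pos (negbT iS); lia.
Qed.

Lemma si_pow_of : B ^+ (p + n) * (B - 1) = 0.
Proof.
apply/matrixP => i j; rewrite -ev_col [RHS]mxE.
case hj: ((p <= j) && (j < n.-1))%N.
  move/andP: hj => [pj jn].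
  have -> : (p + n = (p + n - (n.-1 - j)) + (n.-1 - j))%N by lia.
  rewrite exprD -mulrA comm1 mulrA -!mulmxE -!mulmxA powev //; last by lia.
  rewrite (_ : (j + (n.-1 - j))%N = lst); last by rewrite hlst; lia.
  rewrite killz ?mxE //; last by lia.
  by apply: zero_m1; rewrite hlst ltnn andbF.
rewrite -mulmxE -mulmxA killz ?mxE //; last by lia.
by apply: zero_m1; rewrite hj.
Qed.


End V.

Lemma trX (M : 'M[F]_n) t : (M ^+ t)^T = M^T ^+ t.
Proof.
elim: t => [|t IH]; first by rewrite !expr0 trmx1.
by rewrite exprS exprSr -!mulmxE trmx_mul IH.
Qed.

Lemma trB1 (M : 'M[F]_n) : (M - 1)^T = M^T - 1.
Proof. by rewrite linearB /= trmx1. Qed.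

Lemma powfix c' (C : 'M[F]_(c', n)) (M : 'M[F]_n) t : C *m M = C -> C *m M ^+ t = C.
Proof.
move=> h; elim: t => [|t IH]; first by rewrite expr0 mulmx1.
by rewrite exprSr -mulmxE mulmxA IH h.
Qed.

Lemma si_constr (M : 'M[F]_n) N : M ^+ N * (M - 1) = 0 -> semi_idempotent M.
Proof.
move=> hN; set Bt := M^T.
have hY : (Bt - 1) *m Bt ^+ N = 0.
  by rewrite /Bt -trX -trB1 -trmx_mul mulmxE hN trmx0.
have cm : (Bt - 1) *m Bt = Bt *m (Bt - 1).
  by rewrite mulmxBl mulmxBr mulmx1 mul1mx.
set X := kermx (Bt - 1); set Y := Bt - 1.
have XB : X *m Bt = X.
  by apply/eqP; rewrite -subr_eq0 -[X in _ - X]mulmx1 -mulmxBr mulmx_ker.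
have cap : (X :&: Y = 0)%MS.
  set C := (X :&: Y)%MS.
  have /submxP [D eD] : (C <= Y)%MS by apply: capmxSr.
  have /sub_kermxP hC : (C <= X)%MS by apply: capmxSl.
  have CB : C *m Bt = C.
    by apply/eqP; rewrite -subr_eq0 -[X in _ - X]mulmx1 -mulmxBr hC.
  by rewrite -(powfix N CB) {1}eD -mulmxA hY mulmx0.
exists X, Y; split.
- split; last exact/mxdirect_addsP.
  apply/eqmxP; rewrite submx1 sub1mx /row_full.
  have := mxrank_sum_cap X Y; rewrite cap mxrank0 addn0 mxrank_ker => ->.
  by rewrite /Y subnK ?eqxx // rank_leq_row.
- by rewrite XB.
- by rewrite /Y cm submxMl.
- exact: XB.
- by exists N.
Qed.

Lemma si_pow (M : 'M[F]_n) : semi_idempotent M -> exists N, M ^+ N * (M - 1) = 0.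
Proof.
case=> X [Y [[hsum _] _ _ hX [N hN]]]; exists N; set Bt := M^T.
have h1 : (1%:M <= X + Y)%MS by rewrite hsum submx_refl.
have /sub_addsmxP [u eu] := h1.
have : (Bt - 1) *m Bt ^+ N = 0.
  have e1 : X *m ((Bt - 1) *m Bt ^+ N) = 0.
    by rewrite mulmxA mulmxBr hX mulmx1 subrr mul0mx.
  have e2 : Y *m ((Bt - 1) *m Bt ^+ N) = 0.
    have -> : (Bt - 1) *m Bt ^+ N = Bt ^+ N *m (Bt - 1).
      by rewrite mulmxBl mulmxBr mulmx1 mul1mx mulmxE -exprS -exprSr.
    by rewrite mulmxA hN mul0mx.
  by rewrite -[Bt - 1]mul1mx eu !mulmxDl -!mulmxA e1 e2 !mulmx0 addr0.
move=> h; have := congr1 trmx h.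
by rewrite trmx_mul trX trB1 /Bt trmxK trmx0 mulmxE.
Qed.

Section V2.
Variable v : 'cV[F]_n.
Local Notation B := (repl_last_col A v).

Lemma si_imp : semi_idempotent B -> ~ is_nilpotent B ->
  forall i : 'I_n, (p <= i)%N -> v i 0 = (i == lst)%:R.
Proof.
move=> /si_pow [N hN] nn.
case: (boolP [forall i : 'I_n, (p <= i)%N ==> (v i 0 == 0)]) => [/forallP h|/forallPn [i]].
  by exfalso; apply: nn; apply/nil_iff => i pi; apply/eqP; have := h i; rewrite pi.
rewrite negb_imply => /andP[pi vi].
case: (exmin (ex_intro _ i (conj pi vi))) => j0 [pj0 vj0 hm].
set y := B *m ev j0 - ev j0.
have zy : Z j0 y.
  move=> l hl; rewrite /y mxE [X in _ + X]mxE (presZ pj0 vj0 hm (@Z_ev j0) hl).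
  by rewrite (@Z_ev j0 l hl) subr0.
have y0 : forall l : 'I_n, (j0 <= l)%N -> y l 0 = 0.
  move=> l jl; apply/eqP; apply: contraT => yl.
  have [_ [l2 [_]]] := powNZ pj0 vj0 hm N zy (ex_intro _ l (conj jl yl)).
  by rewrite /y Bm1ev mulmxA mulmxE hN mul0mx mxE eqxx.
case: (ltnP j0 n.-1) => jn.
  have := y0 j0 (leqnn _); rewrite /y Bev // !mxE eqxx.
  rewrite (_ : (_ == _) = false) ?subr_eq0; last by apply/negbTE; lia.
  by rewrite sub0r => /eqP; rewrite oppr_eq0 oner_eq0.
have jl : j0 = lst by apply: val_inj; rewrite /= hlst; have := ltn_ord j0; lia.
move=> l pl; case: (eqVneq l lst) => [->|ne]; last first.
  rewrite hm //; apply/andP; split => //; rewrite jl hlst.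
  have := ltn_ord l; move: ne; rewrite -(inj_eq val_inj) /= hlst; lia.
have := y0 lst; rewrite -jl leqnn => /(_ isT); rewrite /y mxE Bx !mxE jl eqxx.
have -> : (if lst \in S then 0 else ((prv lst : nat) == lst)%:R) = 0 :> F.
  case: ifP => // lS; have l0 := notS_pos (negbT lS).
  by rewrite prvE (_ : (_ == _) = false) //; apply/negbTE; lia.
by rewrite add0r mulr1 => /eqP; rewrite subr_eq0 => /eqP.
Qed.

Lemma si_iff : (semi_idempotent B /\ ~ is_nilpotent B) <->
  forall i : 'I_n, (p <= i)%N -> v i 0 = (i == lst)%:R.
Proof.
split; first by case=> h1 h2; apply: si_imp.
move=> hv; split; first exact: (si_constr (si_pow_of hv)).
move/nil_iff => h; have := h lst p_lst; rewrite hv ?p_lst // eqxx.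
by move/eqP; rewrite oner_eq0.
Qed.


Lemma vT_sub : (v^T <= A^T)%MS <-> forall i, i \in S -> v i 0 = 0.
Proof.
split.
  case/submxP => D eD i iS.
  have := congr1 (fun M : 'M_(1, n) => M 0 i) eD; rewrite /= !mxE => ->.
  by apply: big1 => l _; rewrite mxE hA iS andbF mulr0.
move=> hv; apply/submxP; exists (\row_l v (insubd lst (l : nat).+1) 0).
apply/matrixP => z i; rewrite (ord1 z) !mxE.
under eq_bigr do rewrite !mxE mulrC.
rewrite sumA; case: ifP => iS; first by rewrite hv.
have i0 := notS_pos (negbT iS).
congr (v _ 0); apply: val_inj; rewrite val_insubd prvE prednK //= ltn_ord.
by [].
Qed.

Lemma rank_iff : \rank B = \rank A <-> forall i, i \in S -> v i 0 = 0.
Proof.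
set d : 'rV[F]_n := delta_mx 0 lst.
have eBt : B^T = A^T + d^T *m v^T by rewrite Bdef linearD /= trmx_mul.
have vB : v^T = d *m B^T.
  apply/matrixP => z j; rewrite (ord1 z) -rowE !mxE lst_eq eqxx.
  by [].
have eB : (B^T :=: A^T + v^T)%MS.
  apply/eqmxP/andP; split.
    by rewrite eBt addmx_sub_adds ?submxMl.
  rewrite addsmx_sub vB submxMl andbT.
  have -> : A^T = (1%:M - d^T *m d) *m B^T.
    by rewrite mulmxBl mul1mx -mulmxA -vB eBt addrK.
  exact: submxMl.
rewrite -mxrank_tr -(mxrank_tr A) (eqmx_rank (introT eqmxP eB)) -vT_sub.
have [_ e] := mxrank_leqif_sup (addsmxSl A^T v^T).
rewrite addsmx_sub submx_refl /= in e.
by split => [h|h]; [rewrite -e h | apply/eqP; rewrite eq_sym e].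
Qed.

End V2.

Definition T1 := [set i : 'I_n | (p <= i)%N].
Definition T2 := T1 :|: S.

Lemma setNil : [set v : 'cV[F]_n | `[< is_nilpotent (repl_last_col A v) >]] =
  [set v : 'cV[F]_n | [forall i in T1, v i 0 == 0]].
Proof.
apply/setP => v; rewrite !inE; apply/asboolP/forallP => [/nil_iff h i|h].
  by apply/implyP; rewrite inE => /h ->.
by apply/nil_iff => i pi; apply/eqP; have := h i; rewrite inE pi.
Qed.

Lemma setSI : [set v : 'cV[F]_n | `[< semi_idempotent (repl_last_col A v) >] &&
      ~~ `[< is_nilpotent (repl_last_col A v) >]] =
  [set v : 'cV[F]_n | [forall i in T1, v i 0 == (i == lst)%:R]].
Proof.
apply/setP => v; rewrite !inE; apply/idP/forallP => [/andP[/asboolP h1 /asboolP h2] i|h].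
  by apply/implyP; rewrite inE => pi; rewrite (proj1 (si_iff v) (conj h1 h2)).
have [h1 h2] : semi_idempotent (repl_last_col A v) /\ ~ is_nilpotent (repl_last_col A v).
  by apply/si_iff => i pi; apply/eqP; have := h i; rewrite inE pi.
by rewrite (asboolT h1) (asboolF h2).
Qed.

Lemma setNilR : [set v : 'cV[F]_n | `[< is_nilpotent (repl_last_col A v) >] &&
      (\rank (repl_last_col A v) == \rank A)] =
  [set v : 'cV[F]_n | [forall i in T2, v i 0 == 0]].
Proof.
apply/setP => v; rewrite !inE; apply/idP/forallP => [/andP[/asboolP h1 /eqP h2] i|h].
  apply/implyP; rewrite !inE => /orP[pi|iS].
    by rewrite (proj1 (nil_iff v) h1).
  by rewrite (proj1 (rank_iff v) h2).
apply/andP; split.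
  by apply/asboolP/nil_iff => i pi; apply/eqP; have := h i; rewrite !inE pi.
by apply/eqP/rank_iff => i iS; apply/eqP; have := h i; rewrite !inE iS orbT.
Qed.

Lemma lst_notS (plst : (p < n.-1)%N) : lst \notin S.
Proof. by rewrite hSp ?p_lst // hlst; apply/negP => /eqP; lia. Qed.

Lemma setSIR (plst : (p < n.-1)%N) : [set v : 'cV[F]_n | (`[< semi_idempotent (repl_last_col A v) >] &&
      ~~ `[< is_nilpotent (repl_last_col A v) >]) &&
      (\rank (repl_last_col A v) == \rank A)] =
  [set v : 'cV[F]_n | [forall i in T2, v i 0 == (i == lst)%:R]].
Proof.
apply/setP => v; rewrite !inE; apply/idP/forallP => [/andP[/andP[/asboolP h1 /asboolP h2] /eqP h3] i|h].
  apply/implyP; rewrite !inE => /orP[pi|iS].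
    by rewrite (proj1 (si_iff v) (conj h1 h2)).
  rewrite (proj1 (rank_iff v) h3) //.
  have : i != lst by apply: contraTneq iS => ->; exact: lst_notS plst.
  by move/negbTE ->.
have [h1 h2] : semi_idempotent (repl_last_col A v) /\ ~ is_nilpotent (repl_last_col A v).
  by apply/si_iff => i pi; apply/eqP; have := h i; rewrite !inE pi.
rewrite (asboolT h1) (asboolF h2) /=; apply/eqP/rank_iff => i iS.
have := h i; rewrite !inE iS orbT /= => /eqP ->.
have : i != lst by apply: contraTneq iS => ->; exact: lst_notS plst.
by move/negbTE ->.
Qed.

Lemma main_abs :
  let q := #|F| in
  let M := [set B : 'M[F]_n | [exists v : 'cV[F]_n, B == repl_last_col A v]] in
  let Nil := [set B in M | `[< is_nilpotent B >]] in
  let SI := [set B in M | `[< semi_idempotent B >] && ~~ `[< is_nilpotent B >]] in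
  (#|Nil| = q ^ (n - #|T1|) /\ #|SI| = q ^ (n - #|T1|))%N /\
  ((p < n.-1)%N ->
     #|[set B in Nil | \rank B == \rank A]| = (q ^ (n - #|T2|))%N /\
     #|[set B in SI | \rank B == \rank A]| = (q ^ (n - #|T2|))%N).
Proof.
move=> q M Nil SI.
have cN := card_M A hlst (fun B => `[< is_nilpotent B >]).
have cS := card_M A hlst (fun B => `[< semi_idempotent B >] && ~~ `[< is_nilpotent B >]).
have cNR := card_M A hlst (fun B => `[< is_nilpotent B >] && (\rank B == \rank A)).
have cSR := card_M A hlst (fun B => (`[< semi_idempotent B >] && ~~ `[< is_nilpotent B >])
   && (\rank B == \rank A)).
split; first split.
- by rewrite /Nil cN /= setNil count_vec.
- by rewrite /SI cS /= setSI count_vec.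
move=> plst; split.
- have -> : [set B in Nil | \rank B == \rank A] =
    [set B in M | `[< is_nilpotent B >] && (\rank B == \rank A)].
    by apply/setP => B; rewrite !inE andbA.
  by rewrite cNR /= setNilR count_vec.
- have -> : [set B in SI | \rank B == \rank A] =
    [set B in M | (`[< semi_idempotent B >] && ~~ `[< is_nilpotent B >]) && (\rank B == \rank A)].
    by apply/setP => B; rewrite !inE -!andbA.
  by rewrite cSR /= (setSIR plst) count_vec.
Qed.

End Abs.


Section Inst.
Variables (F : finFieldType) (k : nat) (r : 'I_k.+1 -> nat).
Hypothesis hr : forall i, (0 < r i)%N.
Local Notation n := (\sum_(i < k.+1) r i)%N.
Definition off (i : 'I_k.+1) := (\sum_(l < k.+1 | (l < i)%N) r l)%N.
Definition Sj : {set 'I_n} := [set s | (tagnat.sig2 s : nat) == 0%N].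

Lemma rectE (s : 'I_n) : (s : nat) = (off (tagnat.sig1 s) + tagnat.sig2 s)%N.
Proof. exact: tagnat.rect. Qed.

Lemma RankE i (j : 'I_(r i)) : (@tagnat.Rank _ r i j : nat) = (off i + j)%N.
Proof. exact: tagnat.RankEsum. Qed.

Lemma keyJ (i j : 'I_k.+1) (a : 'I_(r i)) (b : 'I_(r j)) :
  (if i == j then conform_mx 0 (jordan0 F (r i)) else 0) a b =
  ((i == j) && ((a : nat) == (b : nat).+1))%:R.
Proof.
case: eqP => [e|_]; last by rewrite mxE.
by subst j; rewrite conform_mx_id !mxE.
Qed.

Lemma ar1 (s t o a : nat) : s = (o + a)%N -> s = t.+1 -> a != 0%N -> (o + a.-1)%N = t.
Proof. lia. Qed.

Lemma ar2 (t o a b : nat) : t = (o + b)%N -> (o + a.-1)%N = t -> a != 0%N -> a = b.+1.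
Proof. lia. Qed.

Lemma A_entry (s t : 'I_n) :
  jordan_diag F r s t = (((s : nat) == (t : nat).+1) && (s \notin Sj))%:R.
Proof.
rewrite /jordan_diag /mxdiag mxE keyJ inE; congr ((nat_of_bool _)%:R).
have hs := rectE s; have ht := rectE t.
apply/idP/idP.
  case/andP => /eqP e /eqP h.
  rewrite hs ht -(congr1 off e) h; apply/andP; split => //; lia.
case/andP => /eqP e nz.
have lt : ((tagnat.sig2 s : nat).-1 < r (tagnat.sig1 s))%N.
  exact: leq_ltn_trans (leq_pred _) (ltn_ord _).
pose t' : 'I_n := @tagnat.Rank _ r _ (Ordinal lt).
have tv : (t' : nat) = t.
  by rewrite /t' RankE /=; apply: (ar1 hs e nz).
have tt : t' = t := val_inj tv.
have e1 : tagnat.sig1 t = tagnat.sig1 s by rewrite -tt tagnat.Rank1K.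
apply/andP; split; first by rewrite e1.
move: ht; rewrite (congr1 off e1) => ht; apply/eqP; apply: (ar2 ht _ nz).
by rewrite -tv /t' RankE.
Qed.

Lemma ar3 (s o a : nat) : s = (o + a)%N -> s = 0%N -> a = 0%N.
Proof. lia. Qed.
Lemma ar4 (s o a : nat) : s = (o + a)%N -> (a == 0%N) = (s == o).
Proof. move=> ->; rewrite -[X in _ = (_ == X)]addn0 eqn_add2l. by []. Qed.

Lemma pn : n = (off ord_max + r ord_max)%N.
Proof.
rewrite (bigD1 ord_max) //= addnC; congr (_ + _)%N; apply: eq_bigl => i.
have := ltn_ord i; rewrite -(inj_eq val_inj) /= ltnS.
by case: ltngtP.
Qed.

Lemma hS0 (s : 'I_n) : (s : nat) = 0%N -> s \in Sj.
Proof. by move=> h; rewrite inE; apply/eqP; apply: (ar3 (rectE s) h). Qed.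

Definition pm : 'I_n := @tagnat.Rank _ r ord_max (Ordinal (hr ord_max)).

Lemma pmE : (pm : nat) = off ord_max.
Proof. by rewrite /pm RankE addn0. Qed.

Lemma sig1_max (s : 'I_n) : (off ord_max <= s)%N -> tagnat.sig1 s = ord_max.
Proof.
move=> ps; have h := @tagnat.le_sig1 _ r pm s.
have hps : (pm <= s)%O by change (pm <= s)%N; rewrite pmE.
have := h hps; rewrite tagnat.Rank1K => h2.
apply: val_inj => /=; apply/eqP; rewrite eqn_leq -ltnS ltn_ord.
exact: h2.
Qed.

Lemma hSp (s : 'I_n) : (off ord_max <= s)%N -> (s \in Sj) = ((s : nat) == off ord_max).
Proof.
move=> ps; have hs := rectE s; rewrite (congr1 off (sig1_max ps)) in hs.
by rewrite inE (ar4 hs).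
Qed.

Lemma card_Sj : #|Sj| = k.+1.
Proof.
have -> : Sj = [set @tagnat.Rank _ r i (Ordinal (hr i)) | i : 'I_k.+1].
  apply/setP => s; rewrite inE; apply/idP/imsetP.
    move=> /eqP h; exists (tagnat.sig1 s) => //.
    rewrite -{1}(tagnat.sig2K s); congr tagnat.Rank; exact: val_inj.
  case=> i _ ->; by rewrite tagnat.Rank2K.
rewrite card_imset ?cardsT ?card_ord //.
move=> i j e; have := congr1 (@tagnat.sig1 _ r) e; by rewrite !tagnat.Rank1K.
Qed.

End Inst.

Lemma card_ge n p : (p <= n)%N -> #|T1 n p| = (n - p)%N.
Proof.
move=> pn.
have h : #|[set i : 'I_n | (i < p)%N]| = p.
  have -> : [set i : 'I_n | (i < p)%N] = widen_ord pn @: [set: 'I_p].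
    apply/setP => i; rewrite inE; apply/idP/imsetP.
      by move=> ip; exists (Ordinal ip) => //; apply: val_inj.
    by case=> j _ ->; rewrite /= ltn_ord.
  rewrite card_imset ?cardsT ?card_ord //; move=> a b /(congr1 val) /= e; exact: val_inj.
have hc := cardsC (T1 n p); rewrite card_ord in hc.
have hC : ~: T1 n p = [set i : 'I_n | (i < p)%N].
  by apply/setP => i; rewrite !inE ltnNge.
rewrite hC h in hc; lia.
Qed.

Lemma T1S k (r : 'I_k.+1 -> nat) (hr : forall i, (0 < r i)%N) :
  T1 _ (off r ord_max) :&: Sj r = [set pm hr].
Proof.
apply/setP => s; rewrite in_setI in_set1 [s \in T1 _ _]inE; apply/andP/eqP => [[ps sS]|->].
  by move: sS; rewrite (hSp hr ps) => /eqP e; apply: val_inj; change ((s : nat) = pm hr); rewrite pmE.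
by rewrite pmE leqnn (hSp hr) ?pmE ?eqxx.
Qed.

Lemma ar5 (n o m : nat) : n = (o + m)%N -> (1 < m)%N -> (o < n.-1)%N.
Proof. lia. Qed.
Lemma ar7 (x y z : nat) : (x + 1)%N = (y + z.+1)%N -> x = (y + z)%N.
Proof. lia. Qed.
Lemma ar6 (n o m : nat) : n = (o + m)%N -> (0 < m)%N -> (o < n)%N.
Proof. lia. Qed.

Unset Implicit Arguments.

Theorem lemma3p1 (F : finFieldType) (k : nat) (r : 'I_k.+1 -> nat)
  (hr : forall i, (0 < r i)%N) :
  let n := (\sum_(i < k.+1) r i)%N in
  let q := #|F| in
  let A : 'M[F]_n := jordan_diag F r in
  let M := [set B : 'M[F]_n | [exists v : 'cV[F]_n, B == repl_last_col A v]] in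
  let Nil := [set B in M | `[< is_nilpotent B >]] in
  let SI := [set B in M | `[< semi_idempotent B >] && ~~ `[< is_nilpotent B >]] in
  (#|Nil| = #|SI| /\ #|SI| = q ^ (n - r ord_max))%N /\
  ((1 < r ord_max)%N ->
     #|[set B in Nil | \rank B == \rank A]| = #|[set B in SI | \rank B == \rank A]|
     /\ #|[set B in SI | \rank B == \rank A]| = (q ^ (n - r ord_max - k))%N).
Proof.
move=> n q A M Nil SI.
have pn : n = (off r ord_max + r ord_max)%N := pn r.
have n0 : (0 < n)%N by rewrite pn; have := hr ord_max; lia.
have nl : (n.-1 < n)%N by rewrite prednK.
pose lst : 'I_n := Ordinal nl.
have hp : (off r ord_max < n)%N := ar6 pn (hr ord_max).
have H := @main_abs F n (off r ord_max) A (Sj r) lst erefl (@A_entry F k r)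
  (@hS0 k r) (hSp hr) hp.
move: H => /= [[c1 c2] c3].
have cT1 : #|T1 n (off r ord_max)| = r ord_max.
  by rewrite card_ge ?pn ?addKn // leq_addr.
have cT2 : #|@T2 n (off r ord_max) (Sj r)| = (r ord_max + k)%N.
  have := cardsUI (T1 n (off r ord_max)) (Sj r).
  rewrite (T1S hr) cards1 cT1 (card_Sj hr) => h. rewrite /T2. exact: ar7 h.
have e1 : #|Nil| = (q ^ (n - r ord_max))%N by rewrite -cT1.
have e2 : #|SI| = (q ^ (n - r ord_max))%N by rewrite -cT1.
split; first by rewrite e1 e2.
move=> r1; have [d1 d2] := c3 (ar5 pn r1).
rewrite cT2 in d1 d2; rewrite d1 d2 subnDA; split => //.
Qed.
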